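(* Let $R$ be a local ring and $x\in R$ a regular element. Then $x$ is a strong divisor of $R$ if and only if the extension $R\subseteq R_x$ is Prüfer.
   Context: All rings are commutative with identity; ''local'' means having a unique maximal ideal. A strong divisor of a local ring $R$ is a regular element $t\in R$ such that $Rt$ is comparable under inclusion with every ideal of $R$. An extension $A\subseteq B$ is Prüfer if $A\subseteq C$ is a flat epimorphism for each intermediate ring $C$. $R_x$ is the localization of $R$ at the powers of $x$ (which contains $R$ since $x$ is regular). *)

(* Defs.v *)
From mathcomp Require Import all_boot all_algebra.
Set Implicit Arguments. Unset Strict Implicit. Unset Printing Implicit Defensive.
Import GRing.Theory.
Local Open Scope ring_scope.

Definition is_ideal (R : comNzRingType) (I : R -> Prop) : Prop :=
  [/\ I 0, (forall a b, I a -> I b -> I (a + b)) & (forall r a, I a -> I (r * a))].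

Definition is_maximal_ideal (R : comNzRingType) (M : R -> Prop) : Prop :=
  [/\ is_ideal M, ~ M 1 &
      forall J : R -> Prop, is_ideal J -> (forall a, M a -> J a) ->
        (forall a, J a <-> M a) \/ J 1].

Definition local_ring (R : comNzRingType) : Prop :=
  exists M : R -> Prop, is_maximal_ideal M /\
    forall N : R -> Prop, is_maximal_ideal N -> forall a, N a <-> M a.

Definition regular (R : comNzRingType) (x : R) : Prop :=
  forall r : R, x * r = 0 -> r = 0.

Definition principal_ideal (R : comNzRingType) (t : R) : R -> Prop :=
  fun a => exists r, a = r * t.

Definition strong_divisor (R : comNzRingType) (t : R) : Prop :=
  regular t /\
  forall I : R -> Prop, is_ideal I ->
    (forall a, principal_ideal t a -> I a) \/ (forall a, I a -> principal_ideal t a).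

(* B (with the injective morphism phi) is the localization R_x of R at the
   powers of the regular element x: phi is injective, phi x is invertible, and
   every element of B has the form phi r / phi x ^ n. *)
Definition is_localization_at_powers (R B : comNzRingType)
    (phi : {rmorphism R -> B}) (x : R) : Prop :=
  [/\ injective phi,
      (exists y : B, phi x * y = 1) &
      forall b : B, exists r : R, exists n : nat, b * phi x ^+ n = phi r].

Definition intermediate_ring (R B : comNzRingType) (phi : {rmorphism R -> B})
    (C : B -> Prop) : Prop :=
  [/\ forall r, C (phi r),
      (forall a b, C a -> C b -> C (a - b)) &
      (forall a b, C a -> C b -> C (a * b))].

Definition rmorph_on (B D : comNzRingType) (C : B -> Prop) (f : B -> D) : Prop :=
  [/\ f 1 = 1,
      (forall a b, C a -> C b -> f (a + b) = f a + f b) &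
      (forall a b, C a -> C b -> f (a * b) = f a * f b)].

Definition epi_on (R B : comNzRingType) (phi : {rmorphism R -> B})
    (C : B -> Prop) : Prop :=
  forall (D : comNzRingType) (f g : B -> D),
    rmorph_on C f -> rmorph_on C g -> (forall r, f (phi r) = g (phi r)) ->
    forall c, C c -> f c = g c.

(* C is a flat R-module (R acting through phi), by the equational criterion
   of flatness. *)
Definition flat_on (R B : comNzRingType) (phi : {rmorphism R -> B})
    (C : B -> Prop) : Prop :=
  forall (n : nat) (a : 'I_n -> R) (c : 'I_n -> B),
    (forall i, C (c i)) -> \sum_(i < n) phi (a i) * c i = 0 ->
    exists m : nat, exists b : 'I_m -> B, exists A : 'I_n -> 'I_m -> R,
      [/\ forall j, C (b j),
          (forall i, c i = \sum_(j < m) phi (A i j) * b j) &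
          (forall j, \sum_(i < n) a i * A i j = 0)].

Definition flat_epimorphism_on (R B : comNzRingType) (phi : {rmorphism R -> B})
    (C : B -> Prop) : Prop :=
  flat_on phi C /\ epi_on phi C.

Definition prufer_extension (R B : comNzRingType) (phi : {rmorphism R -> B}) : Prop :=
  forall C : B -> Prop, intermediate_ring phi C -> flat_epimorphism_on phi C.

(* Main.v *)
Require Import Defs.
From mathcomp Require Import all_boot all_algebra.
From mathcomp Require Import ring.
From mathcomp Require Import classical_sets.
From Stdlib Require Import Classical IndefiniteDescription.
Set Implicit Arguments. Unset Strict Implicit. Unset Printing Implicit Defensive.
Import GRing.Theory.
Local Open Scope ring_scope.
Lemma fchoice (I : Type) (T : Type) (P : I -> T -> Prop) :
  (forall i, exists t, P i t) -> exists f : I -> T, forall i, P i (f i).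
Proof.
move=> H; exists (fun i => proj1_sig (constructive_indefinite_description _ (H i))).
by move=> i; case: (constructive_indefinite_description _ (H i)).
Qed.

Section Backward.
Variables (R B : comNzRingType) (phi : {rmorphism R -> B}) (x : R).
Variable M : R -> Prop.
Hypothesis Mid : is_ideal M.
Hypothesis M1 : ~ M 1.
Hypothesis Munit : forall r, ~ M r -> exists v, r * v = 1.
Hypothesis inj : injective phi.

Definition ev (t : B) (p : {poly R}) := (map_poly phi p).[t].
Definition Mp (p : {poly R}) := forall k, M p`_k.

Lemma M0 : M 0. Proof. by case: Mid. Qed.
Lemma MD a b : M a -> M b -> M (a + b). Proof. by case: Mid => _ H _; apply: H. Qed.
Lemma MMl r a : M a -> M (r * a). Proof. by case: Mid => _ _ H; apply: H. Qed.
Lemma MMr r a : M a -> M (a * r). Proof. by rewrite mulrC; apply: MMl. Qed.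
Lemma MN a : M a -> M (- a). Proof. by move=> Ha; rewrite -mulN1r; apply: MMl. Qed.

Lemma unit_sub m : M m -> exists v, (1 - m) * v = 1.
Proof.
move=> Hm; apply: Munit => H; apply: M1.
by rewrite -(subrK m 1); apply: MD.
Qed.

Lemma evD t p q : ev t (p + q) = ev t p + ev t q.
Proof. by rewrite /ev rmorphD hornerD. Qed.
Lemma evB t p q : ev t (p - q) = ev t p - ev t q.
Proof. by rewrite /ev rmorphB hornerD hornerN. Qed.
Lemma evM t p q : ev t (p * q) = ev t p * ev t q.
Proof. by rewrite /ev rmorphM hornerM. Qed.
Lemma evZ t c p : ev t (c *: p) = phi c * ev t p.
Proof. by rewrite /ev map_polyZ hornerZ. Qed.
Lemma evC t c : ev t c%:P = phi c.
Proof. by rewrite /ev map_polyC hornerC. Qed.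
Lemma evXn t n : ev t 'X^n = t ^+ n.
Proof. by rewrite /ev map_polyXn hornerXn. Qed.
Lemma evX t : ev t 'X = t.
Proof. by rewrite /ev map_polyX hornerX. Qed.
Lemma ev_sum t (I : Type) (r : seq I) (F : I -> {poly R}) :
  ev t (\sum_(i <- r) F i) = \sum_(i <- r) ev t (F i).
Proof. by rewrite /ev rmorph_sum horner_sum. Qed.

Lemma MpD p q : Mp p -> Mp q -> Mp (p + q).
Proof. by move=> Hp Hq k; rewrite coefD; apply: MD. Qed.
Lemma MpZ c p : Mp p -> Mp (c *: p).
Proof. by move=> Hp k; rewrite coefZ; apply: MMl. Qed.
Lemma MpZl c p : M c -> Mp (c *: p).
Proof. by move=> Hc k; rewrite coefZ; apply: MMr. Qed.
Lemma Mp_sum (I : Type) (r : seq I) (F : I -> {poly R}) :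
  (forall i, Mp (F i)) -> Mp (\sum_(i <- r) F i).
Proof.
move=> HF k; rewrite coef_sum; apply: (big_ind M); [exact: M0|exact: MD|by move=> i _; apply: HF].
Qed.

Hypothesis Hpr : prufer_extension phi.

Lemma L1 t r1 r2 : phi r1 * t = phi r2 ->
  (exists c, r2 = c * r1) \/ (exists c, r1 = c * r2) \/
  (exists P, Mp P /\ ev t P = 1).
Proof.
move=> Ht.
pose C b := exists p, b = ev t p.
have Cint : intermediate_ring phi C.
  split.
  - by move=> r; exists r%:P; rewrite evC.
  - by move=> a b [p ->] [q ->]; exists (p - q); rewrite evB.
  - by move=> a b [p ->] [q ->]; exists (p * q); rewrite evM.
have [Hflat _] := Hpr Cint.
pose a (i : 'I_2) := if val i == 0%N then r1 else - r2.
pose c (i : 'I_2) := if val i == 0%N then t else 1.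
have Cc : forall i, C (c i).
  move=> i; rewrite /c; case: ifP => _.
    by exists 'X; rewrite evX.
  by exists 1%:P; rewrite evC rmorph1.
have Hs : \sum_(i < 2) phi (a i) * c i = 0.
  by rewrite big_ord_recl big_ord1 /= rmorphN mulr1 Ht subrr.
have [m [b [A [Cb Hc HA]]]] := Hflat 2%N a c Cc Hs.
pose i0 : 'I_2 := ord0.
pose i1 : 'I_2 := Ordinal (isT : (1 < 2)%N).
have H1 : 1 = \sum_(j < m) phi (A i1 j) * b j by exact: (Hc i1).
have HA' : forall j, r1 * A i0 j = r2 * A i1 j.
  move=> j; have := HA j; rewrite big_ord_recl big_ord1.
  have -> : lift ord0 ord0 = i1 by apply: val_inj.
  rewrite /a /= mulNr => /eqP; rewrite subr_eq0 => /eqP.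
  by [].
case: (classic (exists j, ~ M (A i1 j))) => [[j Hj]|Hn1].
  have [v Hv] := Munit Hj; left; exists (A i0 j * v).
  have -> : r2 = r2 * (A i1 j * v) by rewrite Hv mulr1.
  by rewrite mulrA -HA'; ring.
case: (classic (exists j, ~ M (A i0 j))) => [[j Hj]|Hn0].
  have [v Hv] := Munit Hj; right; left; exists (A i1 j * v).
  have -> : r1 = r1 * (A i0 j * v) by rewrite Hv mulr1.
  by rewrite mulrA HA'; ring.
right; right.
have HM : forall j, M (A i1 j).
  by move=> j; apply: NNPP => H; apply: Hn1; exists j.
have [f Hf] := fchoice Cb.
exists (\sum_(j < m) A i1 j *: f j); split.
  by apply: Mp_sum => j; apply: MpZl.
rewrite ev_sum H1; apply: eq_bigr => j _.
by rewrite evZ -Hf.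
Qed.


Section Descent.
Variables (s w : B) (Ws : {poly R}).
Hypothesis Hsw : s * w = 1.
Hypothesis HWs : w = ev s Ws.

Definition Inv K := exists D, [/\ Mp D, (size D <= K)%N & s ^+ K = ev s D].

Lemma take1 (p : {poly R}) : take_poly 1 p = (p`_0)%:P.
Proof.
rewrite [LHS]size1_polyC ?size_take_poly // coef_take_poly //.
Qed.

Lemma Norm K F : Mp F -> (size F <= K.+1)%N -> s ^+ K = ev s F -> Inv K.
Proof.
move=> MF sF HF.
have Hd : drop_poly K F = (F`_K)%:P.
  rewrite [LHS]size1_polyC; last by rewrite size_drop_poly leq_subLR addn1.
  by rewrite coef_drop_poly add0n.
have E1 : s ^+ K * (1 - phi F`_K) = ev s (take_poly K F).
  have HF' : ev s F = ev s (take_poly K F) + phi F`_K * s ^+ K.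
    by rewrite -{1}(poly_take_drop K F) Hd evD evM evC evXn mulrC.
  by rewrite mulrBr mulr1 {1}HF HF' (mulrC (phi _)) addrK.
have [v Hv] := unit_sub (MF K).
exists (v *: take_poly K F); split.
- by move=> k; rewrite coefZ coef_take_poly; case: ifP => _; 
    [apply: MMl|rewrite mulr0; exact: M0].
- by apply: leq_trans (size_scale_leq _ _) (size_take_poly _ _).
- by rewrite evZ -E1 mulrC -mulrA -[X in X - _](rmorph1 phi) -rmorphB -rmorphM Hv rmorph1 mulr1.
Qed.

Lemma Red K : Inv K -> forall p, exists E : {poly R}, (size E <= K)%N /\ ev s p = ev s E.
Proof.
move=> [D [MD sD HD]] p.
pose q := 'X^K - D.
have sq : size q = K.+1.
  by rewrite /q size_polyDl size_polyXn // size_polyN ltnS.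
have mq : q \is monic.
  rewrite monicE /q lead_coefDl ?lead_coefXn //.
  by rewrite size_polyXn size_polyN ltnS.
have eq0 : ev s q = 0 by rewrite /q evB evXn HD subrr.
exists (Pdiv.CommonRing.rmodp p q); split.
  by rewrite -ltnS -sq Pdiv.CommonRing.ltn_rmodpN0 // monic_neq0.
by rewrite {1}(Pdiv.RingMonic.rdivp_eq mq p) evD evM eq0 mulr0 add0r.
Qed.

Lemma Step K : Inv K.+1 -> Inv K.
Proof.
move=> HI; have [E [sE HE]] := Red HI Ws.
case: HI => D [MD sD HD].
pose D' := drop_poly 1 D.
have HD1 : D = (D`_0)%:P + D' * 'X.
  by rewrite -take1 /D' -(expr1 'X) poly_take_drop.
have E1 : s ^+ K = phi D`_0 * w + ev s D'.
  have := congr1 (fun z => z * w) HD.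
  rewrite /= [in ev s D]HD1 evD evM evC evX exprSr -mulrA Hsw mulr1 => ->.
  by rewrite mulrDl -mulrA Hsw mulr1.
apply: (@Norm K (D`_0 *: E + D')).
- apply: MpD; first by apply: MpZl.
  by move=> k; rewrite coef_drop_poly.
- rewrite (leq_trans (size_polyD _ _)) // geq_max.
  rewrite (leq_trans (size_scale_leq _ _)) //=.
  by rewrite /D' size_drop_poly; apply: leq_trans (leq_subr _ _) sD.
- by rewrite evD evZ -HE -HWs E1.
Qed.

Lemma Inv_false K : Inv K -> False.
Proof.
elim: K => [|K IH] HI; last exact: IH (Step HI).
case: HI => D [_ sD HD].
move: sD; rewrite leqn0 size_poly_eq0 => /eqP D0.
move: HD; rewrite D0 expr0 /ev rmorph0 horner0 => /eqP.
by rewrite oner_eq0.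
Qed.

Lemma descent (Q : {poly R}) : Mp Q -> ev w Q = 1 -> False.
Proof.
move=> MQ HQ.
pose K := size Q.
pose Qr := \sum_(k < K) Q`_k *: 'X^(K - k).
apply: (@Inv_false K); apply: (@Norm K Qr).
- by apply: Mp_sum => k; apply: MpZl.
- rewrite /Qr; apply: (big_ind (fun p : {poly R} => (size p <= K.+1)%N)).
  + by rewrite size_poly0.
  + by move=> p1 p2 h1 h2; rewrite (leq_trans (size_polyD _ _)) // geq_max h1.
  + move=> k _; rewrite (leq_trans (size_scale_leq _ _)) // size_polyXn.
    by rewrite ltnS leq_subr.
- have HQ' : ev w Q = \sum_(k < K) phi Q`_k * w ^+ k.
    rewrite /ev (@horner_coef_wide _ K); last first.
      by apply/leq_sizeP => j hj; rewrite coef_map nth_default // raddf0.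
    by apply: eq_bigr => k _; rewrite coef_map.
  rewrite -[LHS]mulr1 -HQ HQ' mulr_sumr /Qr ev_sum; apply: eq_bigr => k _.
  rewrite evZ evXn mulrCA; congr (_ * _).
  have hk : (k <= K)%N by apply: ltnW.
  by rewrite -{1}(subnK hk) exprD -mulrA -exprMn Hsw expr1n mulr1.
Qed.
End Descent.

Variable e : B.
Hypothesis He : phi x * e = 1.

Lemma key a : (exists c, a = c * x) \/ (exists c, x = c * a).
Proof.
pose s := phi a * e.
have Ht : phi x * s = phi a by rewrite /s mulrCA He mulr1.
case: (L1 Ht) => [[c Hc]|[[c Hc]|[P [MP HP]]]];
  [by left; exists c | by right; exists c |].
pose W := drop_poly 1 P.
have HP1 : P = (P`_0)%:P + W * 'X by rewrite -take1 /W -(expr1 'X) poly_take_drop.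
have [v Hv] := unit_sub (MP 0%N).
pose Ws := v *: W.
pose w := ev s Ws.
have EW : ev s W * s = 1 - phi P`_0.
  by move: HP; rewrite [in ev s P]HP1 evD evM evC evX => <-; rewrite addrAC subrr add0r.
have Hsw : s * w = 1.
  rewrite /w /Ws evZ mulrCA (mulrC s) EW -[X in X - _](rmorph1 phi) -rmorphB.
  by rewrite -rmorphM mulrC Hv rmorph1.
have Hw : phi a * w = phi x.
  by rewrite -Ht -mulrA Hsw mulr1.
case: (L1 Hw) => [[c Hc]|[[c Hc]|[Q [MQ HQ]]]];
  [by right; exists c | by left; exists c |].
by case: (descent Hsw (erefl _) MQ HQ).
Qed.

End Backward.

Section Forward.
Variables (R B : comNzRingType) (phi : {rmorphism R -> B}) (x : R).

Lemma sd_pow : strong_divisor x -> forall n r,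
  (exists c, r = c * x ^+ n) \/ (exists c, x ^+ n = c * r).
Proof.
move=> [_ Hsd]; elim=> [|n IH] r.
  by left; exists r; rewrite expr0 mulr1.
have Hid : is_ideal (principal_ideal r).
  split; first by exists 0; rewrite mul0r.
  - by move=> a b [c ->] [d ->]; exists (c + d); rewrite mulrDl.
  - by move=> s a [c ->]; exists (s * c); rewrite mulrA.
case: (Hsd _ Hid) => [H|H].
  have [c Hc] := H x (ex_intro _ 1 (esym (mul1r x))).
  by right; exists (x ^+ n * c); rewrite exprSr Hc mulrA.
have [c Hc] := H r (ex_intro _ 1 (esym (mul1r r))).
case: (IH c) => [[d Hd]|[d Hd]].
  by left; exists d; rewrite Hc Hd exprSr mulrA.
by right; exists d; rewrite exprSr Hd Hc mulrA.
Qed.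

Lemma val_prop : strong_divisor x -> is_localization_at_powers phi x ->
  forall b, (exists r, b = phi r) \/ (exists y, phi y * b = 1).
Proof.
move=> Hsd [inj [e He] Hloc] b.
have [r [n Hb]] := Hloc b.
have Hen : phi x ^+ n * e ^+ n = 1 by rewrite -exprMn He expr1n.
case: (sd_pow Hsd n r) => [[c Hc]|[c Hc]].
  left; exists c.
  have := congr1 (fun z => z * e ^+ n) Hb; rewrite /= -mulrA Hen mulr1 => ->.
  by rewrite Hc rmorphM rmorphXn -mulrA Hen mulr1.
right; exists c.
have := congr1 (fun z => phi c * z * e ^+ n) Hb.
by rewrite /= mulrA -mulrA Hen mulr1 -rmorphM -Hc rmorphXn Hen.
Qed.

Lemma forward : strong_divisor x -> is_localization_at_powers phi x ->
  prufer_extension phi.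
Proof.
move=> Hsd Hl; have Hv := val_prop Hsd Hl.
have [inj _ _] := Hl.
move=> C [CR CB CM].
have C1 : C 1 by rewrite -(rmorph1 phi).
split.
- move=> n a c Cc Hsum.
  have Hex : forall i, exists p : R * B * R,
      [/\ C p.1.2, phi p.1.1 * p.1.2 = 1 & c i * phi p.1.1 = phi p.2].
    move=> i; case: (Hv (c i)) => [[r Hr]|[y Hy]].
      by exists (1, 1, r); split; rewrite /= ?rmorph1 ?mulr1 ?Hr.
    by exists (y, c i, 1); split; rewrite /= ?rmorph1 ?(mulrC (c i)).
  have [f Hf] := fchoice Hex.
  pose Y := \prod_(i < n) (f i).1.1.
  pose Z := \prod_(i < n) (f i).1.2.
  have CZ : C Z.
    by apply: (big_ind C) => // i _; case: (Hf i).
  have YZ : phi Y * Z = 1.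
    rewrite /Y /Z rmorph_prod -big_split /=; apply: big1 => i _.
    by case: (Hf i).
  pose A (i : 'I_n) := (f i).2 * \prod_(j < n | j != i) (f j).1.1.
  have HA : forall i, c i * phi Y = phi (A i).
    move=> i; rewrite /Y (bigD1 i) //= rmorphM mulrA.
    by case: (Hf i) => _ _ ->; rewrite /A rmorphM.
  exists 1%N, (fun _ => Z), (fun i _ => A i); split => //.
  + move=> i; rewrite big_ord1 -HA -mulrA YZ mulr1 //.
  + move=> j; apply: inj; rewrite rmorph0 rmorph_sum /=.
    transitivity ((\sum_i phi (a i) * c i) * phi Y); last by rewrite Hsum mul0r.
    rewrite mulr_suml; apply: eq_bigr => i _.
    by rewrite rmorphM -HA mulrA.
- move=> D f g [f1 fD fM] [g1 gD gM] Hfg c Cc.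
  case: (Hv c) => [[r ->]|[y Hy]]; first exact: Hfg.
  have Hf1 : f (phi y) * f c = 1 by rewrite -fM // Hy.
  have Hg1 : g (phi y) * g c = 1 by rewrite -gM // Hy.
  by rewrite -[f c]mulr1 -Hg1 -Hfg mulrA (mulrC (f c)) Hf1 mul1r.
Qed.
End Forward.

Lemma local_units (R : comNzRingType) : local_ring R ->
  exists M : R -> Prop, is_maximal_ideal M /\
    (forall r, ~ M r -> exists v, r * v = 1).
Proof.
move=> [M [HM Huniq]]; exists M; split => // r HrM.
apply: NNPP => Hnu; apply: HrM.
pose P : set (set R) := fun I =>
  [/\ ~ I 1, (forall a b, I a -> I b -> I (a + b)),
      (forall s a, I a -> I (s * a)) & ((exists a, I a) -> I r)].
have [A [[A1 AD AM Ar] Amax]] : exists A, P A /\ forall B, proper A B -> ~ P B.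
  apply: Zorn_bigcup => F FP Ftot; split.
  - by move=> [X FX X1]; have [] := FP X FX.
  - move=> a b [X FX Xa] [Y FY Yb].
    case: (Ftot X Y FX FY) => [XY|YX].
      by exists Y => //; have [_ YD _ _] := FP Y FY; apply: YD => //; apply: XY.
    by exists X => //; have [_ XD _ _] := FP X FX; apply: XD => //; apply: YX.
  - move=> s a [X FX Xa]; exists X => //.
    by have [_ _ XM _] := FP X FX; apply: XM.
  - move=> [a [X FX Xa]]; exists X => //.
    by have [_ _ _ Xr] := FP X FX; apply: Xr; exists a.
have Pr : P (principal_ideal r).
  split.
  - by move=> [c Hc]; apply: Hnu; exists c; rewrite mulrC -Hc.
  - by move=> a b [c ->] [d ->]; exists (c + d); rewrite mulrDl.
  - by move=> s a [c ->]; exists (s * c); rewrite mulrA.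
  - by move=> _; exists 1; rewrite mul1r.
have Ane : exists a, A a.
  apply: NNPP => Hne; apply: (Amax _ _ Pr); split.
    by move=> a Aa; case: Hne; exists a.
  by move=> H; apply: Hne; exists r; apply: H; exists 1; rewrite mul1r.
have Aid : is_ideal A.
  split => //; have [a Aa] := Ane; by rewrite -(mul0r a); apply: AM.
have Amaxi : is_maximal_ideal A.
  split => // J Jid AJ; case: (classic (J 1)) => [J1|nJ1]; [by right|left].
  have [J0 JD JM] := Jid.
  move=> a; split; last exact: AJ.
  move=> Ja; apply: NNPP => nAa; apply: (Amax J).
    by split => // H; apply: nAa; apply: H.
  split => // _; apply: AJ; apply: Ar; exact: Ane.
by apply/(Huniq A Amaxi); apply: Ar.
Qed.

Theorem mainTheorem7 (R : comNzRingType) (x : R) (B : comNzRingType)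
    (phi : {rmorphism R -> B}) :
  local_ring R -> regular x -> is_localization_at_powers phi x ->
  (strong_divisor x <-> prufer_extension phi).
Proof.
move=> Hloc Hreg Hl; split; first by move=> Hsd; exact: forward Hsd Hl.
move=> Hpr; have [M [[Mid M1 _] Munit]] := local_units Hloc.
have [inj [e He] _] := Hl.
split => // I Iid.
case: (classic (forall a, I a -> principal_ideal x a)) => [H|H]; [by right|left].
have [a [Ia Na]] : exists a, I a /\ ~ principal_ideal x a.
  apply: NNPP => H'; apply: H => a Ia; apply: NNPP => Na; apply: H'; by exists a.
have := @key R B phi x M Mid M1 Munit Hpr e He a.
case=> [[c Hc]|[c Hc]]; first by case: Na; exists c.
move=> z [r ->]; have [_ _ IM] := Iid; rewrite Hc mulrA; exact: IM.
Qed.
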